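(* There exist two sequences of real numbers $a_k$, $b_k$ whose associated series converge absolutely, and such that, defining $\bar{\Gamma}_1 := \sum_{k =0}^\infty a_k \big(\frac{\gamma^2}{1+\gamma^2}\big)^k$ and $\bar{\Gamma}_2 := \sum_{k =0}^\infty b_k \big(\frac{\gamma^2}{1+\gamma^2}\big)^k$, the functions $\bar{\Gamma}_1$ and $\bar{\Gamma}_2$ solve $4 \gamma \partial_\gamma \bar \Gamma_1 + 6 \bar \Gamma_1 - 13 \bar \Gamma_2 = 0$, $4 \gamma \partial_\gamma \bar \Gamma_2 + 9 \bar\Gamma_2 - \frac{10} {1+\gamma^2}\big(\bar \Gamma_1 + \gamma^2 \frac{2}{\pi}\int_0^\infty \bar \Gamma_1\frac{d\gamma}{1+\gamma^2}\big) = 0$, with $\frac{2}{\pi}\int_0^\infty \bar{\Gamma}_1\frac{d\gamma}{1+\gamma^2} = A$, where $A=-\frac{351}{19}$.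
   Context: $\gamma=\tan\theta\in[0,\infty)$, so $\frac{2}{\pi}\int_0^\infty f\frac{d\gamma}{1+\gamma^2}$ is the angular average over $\theta\in[0,\pi/2]$. This is the profile equation for $\bar\Gamma=\Gamma^*-\Gamma^*(\gamma=0)$ of the (renormalized) angular profile $\Gamma^*$, whose first component has angular average $26$; $A$ is the angular average of $\bar\Gamma_1$. *)

(* Defs.v *)
From Stdlib Require Import Reals.
From Coquelicot Require Import Coquelicot.
Open Scope R_scope.

Definition Gbar (c : nat -> R) (g : R) : R :=
  Series (fun k => c k * (g ^ 2 / (1 + g ^ 2)) ^ k).

(* Main.v *)
Require Import Defs.
From Stdlib Require Import Reals Lra Lia Psatz.
From Coquelicot Require Import Coquelicot.
Open Scope R_scope.


Definition A0 : R := -(351/19).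
Definition cA (m : nat) : R := match m with O => 10 * A0 | S _ => 0 end.
Definition dd (m : nat) : R := (8*(INR m+1)+6)*(8*(INR m+1)+9) - 130.
Fixpoint ab (k:nat) : R*R := match k with
| O => (0,0)
| S m => let p := fst (ab m) in let q := snd (ab m) in
   let r1 := 8 * INR m * p in
   let r2 := 8 * INR m * q - 10 * p + cA m in
   (((8*(INR m+1)+9)*r1 + 13*r2)/dd m, (10*r1 + (8*(INR m+1)+6)*r2)/dd m) end.
Definition sa k := fst (ab k).
Definition sb k := snd (ab k).

Lemma det_pos m : 0 < dd m.
Proof. unfold dd. pose proof (pos_INR m). nra. Qed.

Lemma sa0 : sa 0 = 0. Proof. reflexivity. Qed.
Lemma sb0 : sb 0 = 0. Proof. reflexivity. Qed.
Lemma sa_S m : sa (S m) = ((8*(INR m+1)+9)*(8 * INR m * sa m) + 13*(8 * INR m * sb m - 10 * sa m + cA m))/dd m.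
Proof. reflexivity. Qed.
Lemma sb_S m : sb (S m) = (10*(8 * INR m * sa m) + (8*(INR m+1)+6)*(8 * INR m * sb m - 10 * sa m + cA m))/dd m.
Proof. reflexivity. Qed.

Lemma rec1 m : (8*(INR m+1)+6) * sa (S m) - 13 * sb (S m) = 8 * INR m * sa m.
Proof.
  rewrite sa_S, sb_S. pose proof (det_pos m). unfold dd in *. field. lra.
Qed.

Lemma rec2 m : -10 * sa (S m) + (8*(INR m+1)+9) * sb (S m) =
   8*INR m * sb m - 10 * sa m + cA m.
Proof.
  rewrite sa_S, sb_S. pose proof (det_pos m). unfold dd in *. field. lra.
Qed.

Lemma sa1 : sa 1 = 13/14 * (35 * A0 / 27).
Proof. rewrite sa_S, sa0, sb0. unfold dd, cA. simpl INR. field. Qed.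
Lemma sb1 : sb 1 = 35 * A0 / 27.
Proof. rewrite sb_S, sa0, sb0. unfold dd, cA. simpl INR. field. Qed.
Definition uu k := sa k + 13/3 * sb k.
Definition ss k := Rabs (uu k) + Rabs (sb k).
Definition tt k := 2 * INR k * ss k.

Lemma uv_step m : (1 <= m)%nat ->
  dd m * uu (S m) = (64*(INR m+1)^2 + 8*(INR m+1) - 2426/3) * uu m + 28730/9 * sb m /\
  dd m * sb (S m) = -140 * uu m + (64*(INR m+1)^2 - 16*(INR m+1) + 1676/3) * sb m.
Proof.
  intros H. assert (cA m = 0) as Hc by (destruct m; [lia|reflexivity]).
  unfold uu. rewrite sa_S, sb_S, Hc. pose proof (det_pos m).
  split; field_simplify; try lra; unfold dd; ring.
Qed.

Lemma s_step m : (99 <= m)%nat -> (2*(INR m+1)+1) * ss (S m) <= 2 * INR m * ss m.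
Proof.
  intros H.
  assert (HK : 99 <= INR m) by (replace 99 with (INR 99) by (simpl; lra); apply le_INR; lia).
  destruct (uv_step m ltac:(lia)) as [E1 E2].
  pose proof (det_pos m) as Hd.
  set (K := INR m + 1) in *.
  set (U := uu m) in *. set (V := sb m) in *.
  assert (HK' : 100 <= K) by (unfold K; lra).
  assert (Hc11 : 0 <= 64*K^2 + 8*K - 2426/3) by nra.
  assert (Hc22 : 0 <= 64*K^2 - 16*K + 1676/3) by nra.
  assert (B1 : dd m * Rabs (uu (S m)) <= (64*K^2 + 8*K - 2426/3) * Rabs U + 28730/9 * Rabs V).
  { rewrite <- (Rabs_pos_eq (dd m)) by lra. rewrite <- Rabs_mult, E1.
    eapply Rle_trans; [apply Rabs_triang|]. rewrite !Rabs_mult.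
    rewrite (Rabs_pos_eq (64*K^2 + 8*K - 2426/3)) by lra.
    rewrite (Rabs_pos_eq (28730/9)) by lra. lra. }
  assert (B2 : dd m * Rabs (sb (S m)) <= 140 * Rabs U + (64*K^2 - 16*K + 1676/3) * Rabs V).
  { rewrite <- (Rabs_pos_eq (dd m)) by lra. rewrite <- Rabs_mult, E2.
    eapply Rle_trans; [apply Rabs_triang|]. rewrite !Rabs_mult.
    rewrite (Rabs_pos_eq (64*K^2 - 16*K + 1676/3)) by lra.
    assert (Rabs (-140) = 140) as R140 by (unfold Rabs; destruct Rcase_abs; lra).
    rewrite R140. lra. }
  assert (Hdd : dd m = 64*K^2 + 120*K - 76) by (unfold dd, K; ring).
  assert (C1 : (2*K+1)*(64*K^2 + 8*K - 2426/3 + 140) <= (2*K-2) * dd m) by (rewrite Hdd; nra).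
  assert (C2 : (2*K+1)*(28730/9 + 64*K^2 - 16*K + 1676/3) <= (2*K-2) * dd m) by (rewrite Hdd; nra).
  pose proof (Rabs_pos U). pose proof (Rabs_pos V).
  assert (H3 : dd m * ((2*K+1) * ss (S m)) <= dd m * (2 * INR m * ss m)).
  { unfold ss. fold U V. replace (2 * INR m) with (2*K-2) by (unfold K; ring).
    assert (0 <= 2*K+1) by lra. nra. }
  apply Rmult_le_reg_l in H3; lra.
Qed.

Lemma ss_ge0 k : 0 <= ss k.
Proof. unfold ss. pose proof (Rabs_pos (uu k)); pose proof (Rabs_pos (sb k)); lra. Qed.

Lemma INR_ge m n : (m <= n)%nat -> INR m <= INR n.
Proof. apply le_INR. Qed.

Lemma t_step m : (99 <= m)%nat -> tt (S m) + ss (S m) <= tt m.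
Proof. intros H. pose proof (s_step m H). unfold tt. rewrite S_INR. lra. Qed.

Lemma t_sq m : (99 <= m)%nat -> (INR (S m) + 1) * tt (S m)^2 <= (INR m + 1) * tt m ^2.
Proof.
  intros H. pose proof (s_step m H) as Hs.
  pose proof (ss_ge0 (S m)) as G1. pose proof (ss_ge0 m) as G0.
  assert (HK : 99 <= INR m) by (replace 99 with (INR 99) by (simpl; lra); apply le_INR; lia).
  unfold tt. rewrite S_INR.
  set (K := INR m + 1) in *. set (s1 := ss (S m)) in *. set (s0 := ss m) in *.
  assert (HK' : 100 <= K) by (unfold K; lra).
  replace (INR m) with (K - 1) in * by (unfold K; ring).
  assert (Q1 : (2*K+1) * (2*K*s1) <= 2*K * (2*(K-1)*s0)) by nra.
  assert (Q2 : 0 <= 2*K*s1) by nra.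
  assert (Q3 : ((2*K+1) * (2*K*s1))^2 <= (2*K * (2*(K-1)*s0))^2).
  { apply pow_incr. split; nra. }
  assert (Q4 : (K+1) * (2*K)^2 <= K * (2*K+1)^2) by nra.
  assert (Q5 : 0 < (2*K+1)^2) by nra.
  set (X := (2*K*s1)) in *. set (Y := 2*(K-1)*s0) in *.
  replace (K - 1 + 1) with K by ring.
  assert (Q6 : (2*K+1)^2 * ((K+1) * X^2) <= (2*K+1)^2 * (K * Y^2)).
  { assert (E : (2*K+1)^2 * ((K+1) * X^2) = (K+1) * ((2*K+1)*X)^2) by ring.
    rewrite E.
    apply Rle_trans with ((K+1) * (2*K*Y)^2).
    - apply Rmult_le_compat_l; lra.
    - assert (0 <= Y^2) by nra. nra. }
  apply Rmult_le_reg_l in Q6; [|lra].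
  replace (2 * (K-1+1) * s1) with X by (unfold X; ring). lra.
Qed.

Lemma tt_ge0 k : 0 <= tt k.
Proof. unfold tt. pose proof (ss_ge0 k); pose proof (pos_INR k). nra. Qed.

Lemma t_bound j : (INR (99+j) + 1) * tt (99+j)^2 <= 100 * tt 99 ^2.
Proof.
  induction j.
  - rewrite Nat.add_0_r. replace (INR 99 + 1) with 100 by (simpl; lra). lra.
  - replace (99 + S j)%nat with (S (99 + j)) by lia.
    pose proof (t_sq (99+j) ltac:(lia)). lra.
Qed.

Lemma sum_bound n : sum_n (fun j => ss (100+j)) n <= tt 99 - tt (100+n).
Proof.
  induction n.
  - rewrite sum_O. pose proof (t_step 99 ltac:(lia)) as T. replace (100+0)%nat with (S 99) by lia. lra.
  - rewrite sum_Sn. pose proof (t_step (100+n) ltac:(lia)).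
    replace (100 + S n)%nat with (S (100 + n)) by lia.
    change (plus (sum_n (fun j : nat => ss (100 + j)) n) (ss (S (100 + n))))
      with (sum_n (fun j : nat => ss (100 + j)) n + ss (S (100 + n))). lra.
Qed.

Lemma ex_series_pos_bounded (u : nat -> R) (M : R) :
  (forall n, 0 <= u n) -> (forall n, sum_n u n <= M) -> ex_series u.
Proof.
  intros Hp Hb.
  assert (ex_finite_lim_seq (sum_n u)) as [l Hl].
  { apply ex_finite_lim_seq_incr with M; auto.
    intros n. rewrite sum_Sn. specialize (Hp (S n)).
    change (sum_n u n <= sum_n u n + u (S n)). lra. }
  exists l. exact Hl.
Qed.

Lemma ex_series_ss : ex_series ss.
Proof.
  apply (ex_series_incr_n ss 100).
  apply ex_series_pos_bounded with (tt 99).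
  - intros; apply ss_ge0.
  - intros n. pose proof (sum_bound n). pose proof (tt_ge0 (100+n)). lra.
Qed.

Lemma abs_sa_le k : Rabs (sa k) <= 5 * ss k.
Proof.
  unfold ss. assert (sa k = uu k - 13/3 * sb k) as E by (unfold uu; ring).
  rewrite E. eapply Rle_trans; [apply Rabs_triang|]. rewrite Rabs_Ropp, Rabs_mult.
  rewrite (Rabs_pos_eq (13/3)) by lra.
  pose proof (Rabs_pos (uu k)). pose proof (Rabs_pos (sb k)). lra.
Qed.
Lemma abs_sb_le k : Rabs (sb k) <= ss k.
Proof. unfold ss. pose proof (Rabs_pos (uu k)). lra. Qed.

Lemma ex_abs_sa : ex_series (fun k => Rabs (sa k)).
Proof.
  apply (@ex_series_le R_AbsRing R_CompleteNormedModule) with (fun k => ss k * 5).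
  - intros n. change (norm (Rabs (sa n))) with (Rabs (Rabs (sa n))). rewrite Rabs_Rabsolu. rewrite Rmult_comm. apply abs_sa_le.
  - apply ex_series_scal_r. apply ex_series_ss.
Qed.
Lemma ex_abs_sb : ex_series (fun k => Rabs (sb k)).
Proof.
  apply (@ex_series_le R_AbsRing R_CompleteNormedModule) with ss.
  - intros n. change (norm (Rabs (sb n))) with (Rabs (Rabs (sb n))). rewrite Rabs_Rabsolu. apply abs_sb_le.
  - apply ex_series_ss.
Qed.
Fixpoint ww k := match k with O => 1 | S m => ww m * (2*INR m+1)/(2*INR m+2) end.
Lemma ww_S m : ww (S m) = ww m * (2*INR m+1)/(2*INR m+2). Proof. reflexivity. Qed.
Lemma ww_bnd k : 0 < ww k <= 1.
Proof.
  induction k.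
  - simpl; lra.
  - rewrite ww_S. pose proof (pos_INR k).
    assert (0 < (2*INR k+1)/(2*INR k+2) <= 1).
    { split. apply Rdiv_lt_0_compat; lra.
      apply Rmult_le_reg_r with (2*INR k+2); [lra|]. unfold Rdiv. rewrite Rmult_assoc, Rinv_l; lra. }
    unfold Rdiv in *. rewrite Rmult_assoc. nra.
Qed.

Definition TT n := ww n * ((4*INR n/5 - 1) * sa n + 4*INR n/5 * sb n).

Lemma TT_step n : (1 <= n)%nat -> TT n - TT (S n) = sa (S n) * ww (S n).
Proof.
  intros H. assert (cA n = 0) as Hc by (destruct n; [lia|reflexivity]).
  unfold TT. rewrite ww_S, sa_S, sb_S, Hc, S_INR. pose proof (det_pos n). pose proof (pos_INR n).
  unfold dd in *. field. lra.
Qed.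

Lemma partial_w n : (1 <= n)%nat -> sum_n (fun k => sa k * ww k) n = A0 - TT n.
Proof.
  intros H. induction n. lia.
  destruct n.
  - rewrite sum_Sn, sum_O. unfold TT. change (plus (sa 0 * ww 0) (sa 1 * ww 1)) with (sa 0 * ww 0 + sa 1 * ww 1).
    rewrite sa0, sa1, sb1. simpl ww. simpl INR. match goal with |- ?x = ?y => change (@eq R x y) end. field.
  - rewrite sum_Sn. change (plus ?x ?y) with (x + y). rewrite IHn by lia.
    pose proof (TT_step (S n) ltac:(lia)). lra.
Qed.

Lemma TT_abs n : (1 <= n)%nat -> Rabs (TT n) <= 5 * tt n.
Proof.
  intros H. unfold TT, tt. pose proof (ww_bnd n).
  assert (HN : 1 <= INR n) by (replace 1 with (INR 1) by reflexivity; apply le_INR; lia).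
  rewrite Rabs_mult, (Rabs_pos_eq (ww n)) by lra.
  pose proof (abs_sa_le n). pose proof (abs_sb_le n). pose proof (ss_ge0 n).
  assert (Rabs ((4 * INR n / 5 - 1) * sa n + 4 * INR n / 5 * sb n) <= 10 * INR n * ss n).
  { eapply Rle_trans; [apply Rabs_triang|]. rewrite !Rabs_mult.
    assert (Rabs (4 * INR n / 5 - 1) <= 4 * INR n / 5 + 1) by (unfold Rabs; destruct Rcase_abs; lra).
    pose proof (Rabs_pos (4 * INR n / 5 - 1)).
    rewrite (Rabs_pos_eq (4 * INR n / 5)) by lra.
    pose proof (Rabs_pos (sa n)). pose proof (Rabs_pos (sb n)). nra. }
  assert (0 <= Rabs ((4 * INR n / 5 - 1) * sa n + 4 * INR n / 5 * sb n)) by apply Rabs_pos.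
  nra.
Qed.

Lemma TT_lim : is_lim_seq TT 0.
Proof.
  apply is_lim_seq_spec. intros eps.
  set (C := 100 * tt 99 ^ 2).
  destruct (INR_unbounded (25 * C / (eps*eps))) as [N HN].
  exists (N + 99)%nat. intros n Hn.
  rewrite Rminus_0_r.
  assert (Hb : (INR n + 1) * tt n ^ 2 <= C).
  { replace n with (99 + (n - 99))%nat by lia. apply t_bound. }
  pose proof (TT_abs n ltac:(lia)) as Ht.
  pose proof (tt_ge0 n). pose proof (Rabs_pos (TT n)).
  assert (HnN : INR N <= INR n) by (apply le_INR; lia).
  pose proof (cond_pos eps) as He.
  assert (HC : 25 * C < (INR n + 1) * (eps*eps)).
  { assert (25 * C / (eps*eps) * (eps * eps) = 25 * C) by (field; lra).
    assert (0 < eps * eps) by nra. nra. }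
  destruct (Rlt_or_le (Rabs (TT n)) eps) as [|Hge]; auto.
  exfalso.
  assert (eps * eps <= 25 * tt n ^ 2) by nra.
  pose proof (pos_INR n). nra.
Qed.

Lemma is_series_w : is_series (fun k => sa k * ww k) A0.
Proof.
  assert (is_lim_seq (fun n => A0 - TT n) A0) as L.
  { replace (Finite A0) with (Rbar_minus A0 0) by (simpl; f_equal; ring).
    apply is_lim_seq_minus'. apply is_lim_seq_const. apply TT_lim. }
  apply is_lim_seq_ext_loc with (v := sum_n (fun k => sa k * ww k)) in L.
  - exact L.
  - exists 1%nat. intros n Hn. symmetry. apply partial_w. lia.
Qed.

Lemma radius_gt (c : nat -> R) (x : R) :
  ex_series (fun k => Rabs (c k)) -> Rabs x < 1 -> Rbar_lt (Rabs x) (CV_radius c).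
Proof.
  intros Hs Hx.
  assert (L : is_lim_seq (fun n => c n * 1 ^ n) 0).
  { apply is_lim_seq_ext with c. intros n; rewrite pow1; ring.
    apply is_lim_seq_abs_0. apply ex_series_lim_0. exact Hs. }
  pose proof (CV_radius_ge_0 c) as H0.
  destruct (CV_radius c) as [r| |] eqn:E; simpl in *; auto.
  destruct (Rlt_or_le (Rabs x) r) as [|Hle]; auto.
  exfalso. apply (CV_disk_outside c 1).
  - rewrite E. simpl. rewrite Rabs_R1. lra.
  - exact L.
Qed.

Lemma lin2 (c d : nat -> R) (x lc ld al be : R) :
  is_series (fun n => c n * x^n) lc -> is_series (fun n => d n * x^n) ld ->
  is_series (fun n => (al * c n + be * d n) * x^n) (al * lc + be * ld).
Proof.
  intros H1 H2.
  apply (is_series_scal al) in H1. apply (is_series_scal be) in H2.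
  pose proof (is_series_plus _ _ _ _ H1 H2) as H3.
  eapply is_series_ext; [|exact H3].
  intros n. unfold scal, plus; simpl. unfold mult; simpl. ring.
Qed.

Lemma ps_is (c : nat -> R) x : ex_pseries c x -> is_series (fun n => c n * x^n) (PSeries c x).
Proof. intros H. apply is_pseries_R. apply PSeries_correct. exact H. Qed.

Lemma is_series_zero_eq (l : R) : is_series (fun _ : nat => 0) l -> l = 0.
Proof.
  intros H. apply is_series_unique in H. rewrite <- H.
  apply is_series_unique. unfold is_series. apply filterlim_ext with (fun _ => 0).
  - intros n. induction n. rewrite sum_O; reflexivity. rewrite sum_Sn, <- IHn. 
    unfold plus; simpl. ring.
  - apply filterlim_const.
Qed.

Definition XX (g : R) : R := g^2 / (1 + g^2).

Lemma XX_bnd g : 0 <= XX g < 1.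
Proof.
  unfold XX. assert (0 <= g^2) by nra. split.
  - apply Rdiv_le_0_compat; lra.
  - apply Rmult_lt_reg_r with (1+g^2); [lra|]. unfold Rdiv. rewrite Rmult_assoc, Rinv_l; lra.
Qed.

Lemma Gbar_eq c g : Gbar c g = PSeries c (XX g).
Proof. reflexivity. Qed.

Lemma deriv_Gbar c g : ex_series (fun k => Rabs (c k)) ->
  is_derive (Gbar c) g (2*g/(1+g^2)^2 * PSeries (PS_derive c) (XX g)).
Proof.
  intros Hc.
  assert (Hr : Rbar_lt (Rabs (XX g)) (CV_radius c)).
  { apply radius_gt; auto. pose proof (XX_bnd g). rewrite Rabs_pos_eq; lra. }
  assert (HX : is_derive XX g (2*g/(1+g^2)^2)).
  { unfold XX. auto_derive. nra. field. nra. }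
  pose proof (is_derive_comp (PSeries c) XX g _ _ (is_derive_PSeries c (XX g) Hr) HX) as H.
  exact H.
Qed.

Lemma ex_ps c x : ex_series (fun k => Rabs (c k)) -> Rabs x < 1 -> ex_pseries c x.
Proof. intros; apply CV_radius_inside, radius_gt; auto. Qed.

Lemma ode1 x : Rabs x < 1 ->
  8*x*(1-x)*PSeries (PS_derive sa) x + 6*PSeries sa x - 13*PSeries sb x = 0.
Proof.
  intros Hx.
  pose proof (radius_gt sa x ex_abs_sa Hx) as Ra.
  set (D := PS_derive sa).
  assert (ED : ex_pseries D x) by (apply ex_pseries_derive; auto).
  assert (S1 := ps_is _ _ (ex_pseries_incr_1 _ _ ED)).
  assert (S2 := ps_is _ _ (ex_pseries_incr_1 _ _ (ex_pseries_incr_1 _ _ ED))).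
  assert (S3 := ps_is _ _ (ex_ps sa x ex_abs_sa Hx)).
  assert (S4 := ps_is _ _ (ex_ps sb x ex_abs_sb Hx)).
  rewrite !PSeries_incr_1 in S1, S2. rewrite (PSeries_incr_1 D x) in S2.
  pose proof (lin2 _ _ _ _ _ 8 (-8) S1 S2) as T1.
  pose proof (lin2 _ _ _ _ _ 6 (-13) S3 S4) as T2.
  pose proof (lin2 _ _ _ _ _ 1 1 T1 T2) as T3.
  match type of T3 with is_series _ ?l => replace (8*x*(1-x)*PSeries D x + 6*PSeries sa x - 13*PSeries sb x) with l by ring end.
  apply is_series_zero_eq. eapply is_series_ext; [|exact T3].
  intros n. simpl.
  destruct n as [|m].
  - simpl. rewrite sa0, sb0. ring.
  - unfold D, PS_derive.
    assert (E : (PS_incr_1 (fun n : nat => INR (S n) * sa (S n)) m : R) = INR m * sa m).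
    { destruct m. simpl. rewrite Rmult_0_l. reflexivity. reflexivity. }
    change (PS_incr_1 (PS_incr_1 (fun n : nat => INR (S n) * sa (S n))) (S m)) with
       (PS_incr_1 (fun n : nat => INR (S n) * sa (S n)) m).
    change (PS_incr_1 (fun n : nat => INR (S n) * sa (S n)) (S m)) with (INR (S m) * sa (S m)).
    rewrite E. pose proof (rec1 m) as R1. rewrite S_INR.
    replace ((1 * (8 * ((INR m + 1) * sa (S m)) + -8 * (INR m * sa m)) + 1 * (6 * sa (S m) + -13 * sb (S m)))) with ((8 * (INR m + 1) + 6) * sa (S m) - 13 * sb (S m) - 8 * INR m * sa m) by ring.
    rewrite R1. ring.
Qed.

Definition e0 (n : nat) : R := match n with O => A0 | S _ => 0 end.
Lemma e0_series x : is_series (fun n => e0 n * x^n) A0.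
Proof.
  unfold is_series. apply filterlim_ext with (fun _ => A0).
  - intros n. induction n. rewrite sum_O. simpl. ring. rewrite sum_Sn, <- IHn.
    unfold plus; simpl. ring.
  - apply filterlim_const.
Qed.

Lemma ode2 x : Rabs x < 1 ->
  8*x*(1-x)*PSeries (PS_derive sb) x + 9*PSeries sb x - 10*(1-x)*PSeries sa x - 10*x*A0 = 0.
Proof.
  intros Hx.
  pose proof (radius_gt sb x ex_abs_sb Hx) as Rb.
  set (D := PS_derive sb).
  assert (ED : ex_pseries D x) by (apply ex_pseries_derive; auto).
  assert (Ea := ex_ps sa x ex_abs_sa Hx).
  assert (S1 := ps_is _ _ (ex_pseries_incr_1 _ _ ED)).
  assert (S2 := ps_is _ _ (ex_pseries_incr_1 _ _ (ex_pseries_incr_1 _ _ ED))).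
  assert (S3 := ps_is _ _ (ex_ps sb x ex_abs_sb Hx)).
  assert (S4 := ps_is _ _ Ea).
  assert (S5 := ps_is _ _ (ex_pseries_incr_1 _ _ Ea)).
  assert (Ee : ex_pseries e0 x) by (exists A0; apply is_pseries_R, e0_series).
  assert (S6 := ps_is _ _ (ex_pseries_incr_1 _ _ Ee)).
  rewrite !PSeries_incr_1 in S1, S2, S5, S6. rewrite (PSeries_incr_1 D x) in S2.
  assert (PSeries e0 x = A0) as HE by (apply is_series_unique; apply e0_series).
  rewrite HE in S6.
  pose proof (lin2 _ _ _ _ _ 8 (-8) S1 S2) as T1.
  pose proof (lin2 _ _ _ _ _ 9 (-10) S3 S4) as T2.
  pose proof (lin2 _ _ _ _ _ 10 (-10) S5 S6) as T3.
  pose proof (lin2 _ _ _ _ _ 1 1 T1 T2) as T4.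
  pose proof (lin2 _ _ _ _ _ 1 1 T4 T3) as T5.
  match type of T5 with is_series _ ?l => replace (8*x*(1-x)*PSeries D x + 9*PSeries sb x - 10*(1-x)*PSeries sa x - 10*x*A0) with l by ring end.
  apply is_series_zero_eq. eapply is_series_ext; [|exact T5].
  intros n. simpl.
  destruct n as [|m].
  - simpl. rewrite sa0, sb0. ring.
  - unfold D, PS_derive.
    assert (E : (PS_incr_1 (fun n : nat => INR (S n) * sb (S n)) m : R) = INR m * sb m).
    { destruct m. simpl. rewrite Rmult_0_l. reflexivity. reflexivity. }
    change (PS_incr_1 (PS_incr_1 (fun n : nat => INR (S n) * sb (S n))) (S m)) with
       (PS_incr_1 (fun n : nat => INR (S n) * sb (S n)) m).
    change (PS_incr_1 (fun n : nat => INR (S n) * sb (S n)) (S m)) with (INR (S m) * sb (S m)).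
    change (PS_incr_1 sa (S m)) with (sa m).
    change (PS_incr_1 e0 (S m)) with (e0 m).
    assert (Hc : cA m = 10 * e0 m) by (destruct m; simpl; ring).
    rewrite E. pose proof (rec2 m) as R2. rewrite S_INR.
    match goal with |- ?c * _ = 0 => replace c with ((-10 * sa (S m) + (8*(INR m+1)+9) * sb (S m)) - (8*INR m * sb m - 10 * sa m + cA m)) by (rewrite Hc; ring) end.
    rewrite R2. ring.
Qed.

Definition ig (k : nat) (g : R) : R := XX g ^ k / (1 + g^2).
Definition hh (m : nat) (g : R) : R := g / (1 + g^2) * XX g ^ m.
Definition hd (m : nat) (g : R) : R := (2*INR m+1) * ig m g - (2*INR m+2) * ig (S m) g.

Lemma one_g2 g : 0 < 1 + g^2.
Proof. nra. Qed.

Lemma hh_derive m g : is_derive (hh m) g (hd m g).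
Proof.
  assert (HX : is_derive XX g (2*g/(1+g^2)^2)).
  { unfold XX. auto_derive. nra. field. nra. }
  assert (HP : is_derive (fun g => XX g ^ m) g (INR m * (2*g/(1+g^2)^2) * XX g ^ (pred m))).
  { apply (is_derive_pow XX m g). exact HX. }
  assert (Hq : is_derive (fun g => g / (1+g^2)) g ((1 - g^2)/(1+g^2)^2)).
  { auto_derive. nra. field. nra. }
  pose proof (is_derive_mult _ _ g _ _ Hq HP (fun x y => Rmult_comm x y)) as H.
  unfold hh.
  match type of H with is_derive _ _ ?l => replace (hd m g) with l end.
  - exact H.
  - unfold hd, ig, plus, mult; simpl. pose proof (one_g2 g).
    destruct m as [|m'].
    + simpl. unfold XX. field. lra.
    + simpl pred. rewrite S_INR. simpl pow. set (P := XX g ^ m'). unfold XX. field. lra.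
Qed.

Lemma hd_cont m g : continuous (hd m) g.
Proof.
  apply (@ex_derive_continuous R_AbsRing R_NormedModule). unfold hd, ig, XX. auto_derive. pose proof (one_g2 g). lra.
Qed.

Fixpoint EE (k : nat) (b : R) : R := match k with
  | O => 0
  | S m => (2*INR m+1)/(2*INR m+2) * EE m b + hh m b / (2*INR m+2) end.

Lemma J_int k b : is_RInt (ig k) 0 b (ww k * atan b - EE k b).
Proof.
  induction k.
  - simpl.
    assert (H := is_RInt_derive atan (fun g => / (1 + g^2)) 0 b).
    replace (1 * atan b - 0) with (minus (atan b) (atan 0)).
    2: { unfold minus, plus, opp; simpl. rewrite atan_0. ring. }
    eapply is_RInt_ext; [|apply H].
    + intros x _. unfold ig. simpl. field. pose proof (one_g2 x). lra.
    + intros x _. pose proof (is_derive_atan x). unfold Rsqr in H0. simpl in H0 |- *.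
      replace (1 + x * (x * 1)) with (1 + x*x) by ring. exact H0.
    + intros x _. apply (@ex_derive_continuous R_AbsRing R_NormedModule). auto_derive. pose proof (one_g2 x). simpl in H0. lra.
  - assert (Hh := is_RInt_derive (hh k) (hd k) 0 b (fun x _ => hh_derive k x) (fun x _ => hd_cont k x)).
    pose proof (is_RInt_scal _ _ _ ((2*INR k+1)/(2*INR k+2)) _ IHk) as H1.
    pose proof (is_RInt_scal _ _ _ (-1/(2*INR k+2)) _ Hh) as H2.
    pose proof (is_RInt_plus _ _ _ _ _ _ H1 H2) as H3.
    pose proof (pos_INR k).
    match type of H3 with is_RInt _ _ _ ?l => replace (ww (S k) * atan b - EE (S k) b) with l end.
    + eapply is_RInt_ext; [|exact H3].
      intros x _. unfold hd, scal, plus; simpl. unfold mult; simpl. field. lra.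
    + unfold scal, plus, minus, opp, mult; simpl. unfold plus, opp, mult; simpl.
      unfold hh. simpl. field. split; [nra | lra].
Qed.

Lemma XX_pow_bnd g m : 0 <= XX g ^ m <= 1.
Proof.
  pose proof (XX_bnd g). induction m. simpl; lra. simpl. nra.
Qed.

Lemma hh_bnd m b : 0 < b -> 0 <= hh m b <= / b.
Proof.
  intros Hb. unfold hh. pose proof (XX_pow_bnd b m). pose proof (one_g2 b).
  assert (0 <= b / (1+b^2) <= / b).
  { split. apply Rdiv_le_0_compat; lra.
    apply Rmult_le_reg_r with (b * (1+b^2)). nra.
    field_simplify; try lra. }
  nra.
Qed.

Lemma EE_ge0 k b : 0 <= b -> 0 <= EE k b.
Proof.
  intros Hb. induction k. simpl; lra. simpl. pose proof (pos_INR k).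
  assert (0 <= hh k b).
  { unfold hh. pose proof (XX_pow_bnd b k). pose proof (one_g2 b).
    apply Rmult_le_pos; auto. apply Rdiv_le_0_compat; lra. lra. }
  assert (0 <= (2 * INR k + 1) / (2 * INR k + 2)) by (apply Rdiv_le_0_compat; lra).
  assert (0 <= hh k b / (2 * INR k + 2)) by (apply Rdiv_le_0_compat; lra).
  nra.
Qed.

Lemma EE_le_k k b : 0 < b -> EE k b <= INR k / b.
Proof.
  intros Hb. induction k. simpl. unfold Rdiv; lra.
  simpl EE. rewrite S_INR. pose proof (pos_INR k). pose proof (hh_bnd k b Hb).
  pose proof (EE_ge0 k b ltac:(lra)).
  assert ((2 * INR k + 1) / (2 * INR k + 2) * EE k b <= EE k b).
  { apply Rmult_le_reg_r with (2 * INR k + 2). lra. replace ((2 * INR k + 1) / (2 * INR k + 2) * EE k b * (2 * INR k + 2)) with ((2 * INR k + 1) * EE k b) by (field; lra). nra. }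
  assert (hh k b / (2 * INR k + 2) <= / b).
  { apply Rmult_le_reg_r with (2 * INR k + 2). lra. unfold Rdiv. rewrite Rmult_assoc, Rinv_l by lra.
    assert (0 < / b) by (apply Rinv_0_lt_compat; lra). nra. }
  replace ((INR k + 1) / b) with (INR k / b + / b) by (field; lra). lra.
Qed.

Lemma ig_ge0 k g : 0 <= ig k g.
Proof. unfold ig. pose proof (XX_pow_bnd g k). pose proof (one_g2 g). apply Rdiv_le_0_compat; lra. Qed.

Lemma J_bnd k b : 0 <= b -> 0 <= ww k * atan b - EE k b <= 2 /\ EE k b <= 2.
Proof.
  intros Hb. pose proof (is_RInt_ge_0 _ _ _ _ Hb (J_int k b) (fun x _ => ig_ge0 k x)).
  pose proof (EE_ge0 k b Hb). pose proof (ww_bnd k). pose proof (atan_bound b). pose proof PI_4.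
  assert (ww k * atan b <= 2).
  { destruct (Rle_or_lt 0 (atan b)); nra. }
  lra.
Qed.

Lemma series_split (c : nat -> R) N : ex_series c ->
  Series c = sum_n c N + Series (fun k => c (S N + k)%nat).
Proof.
  intros H. rewrite (Series_incr_n c (S N)) by (lia || auto). simpl pred. rewrite sum_n_Reals. reflexivity.
Qed.

Lemma Series_nonneg (c : nat -> R) : (forall n, 0 <= c n) -> ex_series c -> 0 <= Series c.
Proof.
  intros H1 H2. pose proof (Series_le (fun _ => 0) c (fun n => conj (Rle_refl 0) (H1 n)) H2).
  assert (Series (fun _ : nat => 0) = 0) as E.
  { apply is_series_unique. unfold is_series. apply filterlim_ext with (fun _ => 0).
    - intros n. induction n. rewrite sum_O; reflexivity. rewrite sum_Sn, <- IHn. unfold plus; simpl. ring.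
    - apply filterlim_const. }
  lra.
Qed.

Lemma tail_gen (c y : nat -> R) N : ex_series (fun k => Rabs (c k)) -> (forall k, Rabs (y k) <= 1) ->
  Rabs (Series (fun k => c k * y k) - sum_n (fun k => c k * y k) N) <=
  Series (fun k => Rabs (c k)) - sum_n (fun k => Rabs (c k)) N.
Proof.
  intros Hc Hy.
  assert (Hle : forall k, Rabs (c k * y k) <= Rabs (c k)).
  { intros k. rewrite Rabs_mult. pose proof (Rabs_pos (c k)). pose proof (Rabs_pos (y k)). specialize (Hy k). nra. }
  assert (E1 : ex_series (fun k => Rabs (c k * y k))).
  { apply (@ex_series_le R_AbsRing R_CompleteNormedModule) with (fun k => Rabs (c k)); auto.
    intros n. change (norm (Rabs (c n * y n))) with (Rabs (Rabs (c n * y n))). rewrite Rabs_Rabsolu. auto. }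
  assert (E2 : ex_series (fun k => c k * y k)) by (apply ex_series_Rabs; auto).
  rewrite (series_split _ N E2), (series_split _ N Hc).
  replace (sum_n (fun k : nat => c k * y k) N + Series (fun k : nat => c (S N + k)%nat * y (S N + k)%nat) -
     sum_n (fun k : nat => c k * y k) N) with (Series (fun k : nat => c (S N + k)%nat * y (S N + k)%nat)) by ring.
  replace (sum_n (fun k : nat => Rabs (c k)) N + Series (fun k : nat => Rabs (c (S N + k)%nat)) -
     sum_n (fun k : nat => Rabs (c k)) N) with (Series (fun k : nat => Rabs (c (S N + k)%nat))) by ring.
  eapply Rle_trans; [apply Series_Rabs|].
  - apply (ex_series_incr_n (fun k => Rabs (c k * y k)) (S N)). auto.
  - apply Series_le. intros n; split; [apply Rabs_pos| apply Hle].
    apply (ex_series_incr_n (fun k => Rabs (c k)) (S N)). auto.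
Qed.

Lemma tail_small (c : nat -> R) : ex_series (fun k => Rabs (c k)) ->
  forall eps, 0 < eps -> exists N, forall n, (N <= n)%nat ->
    Series (fun k => Rabs (c k)) - sum_n (fun k => Rabs (c k)) n < eps.
Proof.
  intros [l Hl] eps He.
  assert (Hs : Series (fun k => Rabs (c k)) = l) by (apply is_series_unique; auto).
  assert (L : is_lim_seq (sum_n (fun k => Rabs (c k))) l) by exact Hl.
  apply is_lim_seq_spec in L. destruct (L (mkposreal eps He)) as [N HN].
  exists N. intros n Hn. specialize (HN n Hn). simpl in HN. rewrite Hs.
  apply Rabs_def2 in HN. destruct HN. lra.
Qed.

Lemma sum_n_ext_R (c d : nat -> R) n : (forall k, c k = d k) -> sum_n c n = sum_n d n.
Proof. intros H. apply sum_n_ext. auto. Qed.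

Lemma sum_div (c : nat -> R) d n : sum_n (fun k => c k / d) n = sum_n c n / d.
Proof.
  induction n. rewrite !sum_O. reflexivity.
  rewrite !sum_Sn, IHn. unfold plus; simpl. unfold Rdiv. ring.
Qed.

Lemma int_G b : 0 <= b ->
  is_RInt (fun g => Gbar sa g / (1+g^2)) 0 b (Series (fun k => sa k * (ww k * atan b - EE k b))).
Proof.
  intros Hb.
  set (Jb := fun k => ww k * atan b - EE k b).
  assert (Hf : forall n, is_RInt (fun g => sum_n (fun k => sa k * ig k g) n) 0 b (sum_n (fun k => sa k * Jb k) n)).
  { induction n.
    - rewrite sum_O. apply (is_RInt_ext (fun g => sa 0 * ig 0 g)); [intros x _; rewrite sum_O; reflexivity|].
      exact (is_RInt_scal _ _ _ _ _ (J_int 0 b)).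
    - rewrite sum_Sn. apply (is_RInt_ext (fun g => plus (sum_n (fun k => sa k * ig k g) n) (sa (S n) * ig (S n) g))); [intros x _; rewrite sum_Sn; reflexivity|].
      exact (is_RInt_plus _ _ _ _ _ _ IHn (is_RInt_scal _ _ _ _ _ (J_int (S n) b))). }
  destruct (filterlim_RInt (fun n g => sum_n (fun k => sa k * ig k g) n) 0 b eventually eventually_filter
     (fun g => Gbar sa g / (1+g^2)) (fun n => sum_n (fun k => sa k * Jb k) n) Hf) as [If [HIf HR]].
  - apply filterlim_locally. intros eps.
    destruct (tail_small sa ex_abs_sa eps (cond_pos eps)) as [N HN].
    exists N. intros n Hn t.
    unfold ball; simpl. unfold AbsRing_ball, abs, minus, plus, opp; simpl.
    rewrite (sum_n_ext_R _ (fun k => sa k * XX t ^ k / (1+t^2))) by (intros; unfold ig, Rdiv; ring).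
    rewrite sum_div. rewrite Gbar_eq. unfold PSeries.
    pose proof (tail_gen sa (fun k => XX t ^ k) n ex_abs_sa) as T.
    assert (forall k, Rabs (XX t ^ k) <= 1).
    { intros k. pose proof (XX_pow_bnd t k). rewrite Rabs_pos_eq; lra. }
    specialize (T H). specialize (HN n Hn).
    pose proof (one_g2 t).
    replace (1 + t * (t * 1)) with (1 + t^2) by ring.
    replace (sum_n (fun k : nat => sa k * XX t ^ k) n / (1 + t ^ 2) +
      - (Series (fun k : nat => sa k * XX t ^ k) / (1 + t ^ 2))) with
      (- (Series (fun k : nat => sa k * XX t ^ k) - sum_n (fun k : nat => sa k * XX t ^ k) n) / (1+t^2)) by (field; lra).
    unfold Rdiv. rewrite Rabs_mult, Rabs_Ropp, (Rabs_pos_eq (/ (1+t^2))).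
    2: { left; apply Rinv_0_lt_compat; lra. }
    assert (/ (1 + t^2) <= 1).
    { apply Rmult_le_reg_r with (1+t^2); [lra|]. rewrite Rinv_l by lra. nra. }
    assert (0 < / (1+t^2)) by (apply Rinv_0_lt_compat; lra).
    pose proof (Rabs_pos (Series (fun k : nat => sa k * XX t ^ k) - sum_n (fun k : nat => sa k * XX t ^ k) n)).
    nra.
  - replace (Series (fun k => sa k * (ww k * atan b - EE k b))) with If; [exact HR|].
    assert (Ex : ex_series (fun k => sa k * Jb k)).
    { apply ex_series_Rabs. apply (@ex_series_le R_AbsRing R_CompleteNormedModule) with (fun k => Rabs (sa k) * 2).
      - intros n. change (norm (Rabs (sa n * Jb n))) with (Rabs (Rabs (sa n * Jb n))). rewrite Rabs_Rabsolu.
        rewrite Rabs_mult. pose proof (J_bnd n b Hb). unfold Jb. rewrite (Rabs_pos_eq (ww n * atan b - EE n b)) by lra.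
        pose proof (Rabs_pos (sa n)). nra.
      - apply ex_series_scal_r. apply ex_abs_sa. }
    pose proof (Series_correct _ Ex) as HS.
    exact (filterlim_locally_unique (F := eventually) _ _ _ HIf HS).
Qed.

Lemma ex_sa_EE b : 0 <= b -> ex_series (fun k => sa k * EE k b).
Proof.
  intros Hb. apply ex_series_Rabs. apply (@ex_series_le R_AbsRing R_CompleteNormedModule) with (fun k => Rabs (sa k) * 2).
  - intros n. change (norm (Rabs (sa n * EE n b))) with (Rabs (Rabs (sa n * EE n b))). rewrite Rabs_Rabsolu.
    rewrite Rabs_mult. pose proof (J_bnd n b Hb). pose proof (EE_ge0 n b Hb). rewrite (Rabs_pos_eq (EE n b)) by lra.
    pose proof (Rabs_pos (sa n)). nra.
  - apply ex_series_scal_r. apply ex_abs_sa.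
Qed.

Lemma Phi_eq b : 0 <= b ->
  Series (fun k => sa k * (ww k * atan b - EE k b)) = atan b * A0 - Series (fun k => sa k * EE k b).
Proof.
  intros Hb.
  rewrite (Series_ext _ (fun k => atan b * (sa k * ww k) - sa k * EE k b)) by (intros; ring).
  rewrite Series_minus.
  - rewrite Series_scal_l. rewrite (is_series_unique _ _ is_series_w). reflexivity.
  - exists (atan b * A0). exact (is_series_scal_l (atan b) _ _ is_series_w).
  - apply ex_sa_EE; auto.
Qed.

Lemma sum_abs_bound (c e : nat -> R) N B : (forall k, (k <= N)%nat -> Rabs (e k) <= B) ->
  Rabs (sum_n (fun k => c k * e k) N) <= sum_n (fun k => Rabs (c k)) N * B.
Proof.
  intros H. induction N.
  - rewrite !sum_O. rewrite Rabs_mult. pose proof (Rabs_pos (c 0%nat)). pose proof (H 0%nat (le_n 0)). nra.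
  - rewrite !sum_Sn. unfold plus; simpl.
    eapply Rle_trans; [apply Rabs_triang|].
    rewrite Rabs_mult. pose proof (Rabs_pos (c (S N))). pose proof (H (S N) (le_n _)).
    assert (Rabs (sum_n (fun k : nat => c k * e k) N) <= sum_n (fun k : nat => Rabs (c k)) N * B).
    { apply IHN. intros k Hk. apply H. lia. }
    nra.
Qed.

Lemma partial_le_series (c : nat -> R) N : ex_series (fun k => Rabs (c k)) ->
  sum_n (fun k => Rabs (c k)) N <= Series (fun k => Rabs (c k)).
Proof.
  intros H. rewrite (series_split _ N H).
  pose proof (Series_nonneg (fun k => Rabs (c (S N + k)%nat)) (fun n => Rabs_pos _)
     (proj1 (ex_series_incr_n (fun k => Rabs (c k)) (S N)) H)). lra.
Qed.

Lemma lim_EE eps : 0 < eps -> exists M, forall b, M < b -> Rabs (Series (fun k => sa k * EE k b)) < eps.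
Proof.
  intros He.
  destruct (tail_small sa ex_abs_sa (eps/4) ltac:(lra)) as [N HN].
  specialize (HN N (le_n N)).
  set (S := Series (fun k => Rabs (sa k))).
  assert (HS : 0 <= S) by (apply Series_nonneg; [intros; apply Rabs_pos| apply ex_abs_sa]).
  exists (1 + 2 * S * (INR N + 1) / eps). intros b Hb.
  assert (Hb0 : 0 < b).
  { assert (0 <= 2 * S * (INR N + 1) / eps). { apply Rdiv_le_0_compat; [|lra]. pose proof (pos_INR N). nra. } lra. }
  set (y := fun k => EE k b / 2).
  assert (Hy : forall k, Rabs (y k) <= 1).
  { intros k. unfold y. pose proof (J_bnd k b ltac:(lra)). pose proof (EE_ge0 k b ltac:(lra)).
    rewrite Rabs_pos_eq; lra. }
  pose proof (tail_gen sa y N ex_abs_sa Hy) as T.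
  assert (Hfin : Rabs (sum_n (fun k => sa k * y k) N) <= sum_n (fun k => Rabs (sa k)) N * (INR N / (2*b))).
  { apply sum_abs_bound. intros k Hk. unfold y. pose proof (EE_le_k k b Hb0). pose proof (EE_ge0 k b ltac:(lra)).
    rewrite Rabs_pos_eq by lra. assert (INR k <= INR N) by (apply le_INR; auto).
    apply Rmult_le_reg_r with 2; [lra|].
    replace (EE k b / 2 * 2) with (EE k b) by field.
    replace (INR N / (2 * b) * 2) with (INR N / b) by (field; lra).
    apply Rle_trans with (INR k / b); auto. unfold Rdiv. apply Rmult_le_compat_r; auto.
    left; apply Rinv_0_lt_compat; lra. }
  assert (Hp : sum_n (fun k => Rabs (sa k)) N <= S) by (apply partial_le_series, ex_abs_sa).
  assert (Hq : S * (INR N / (2*b)) < eps / 4).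
  { pose proof (pos_INR N).
    assert (2 * S * (INR N + 1) < eps * b).
    { assert (2 * S * (INR N + 1) / eps * eps = 2 * S * (INR N + 1)) by (field; lra). nra. }
    apply Rmult_lt_reg_r with (2*b); [lra|].
    replace (S * (INR N / (2 * b)) * (2 * b)) with (S * INR N) by (field; lra). nra. }
  assert (0 <= INR N / (2*b)) by (apply Rdiv_le_0_compat; [apply pos_INR|lra]).
  assert (Hfin2 : Rabs (sum_n (fun k => sa k * y k) N) < eps / 4) by nra.
  assert (Hser : Rabs (Series (fun k => sa k * y k)) < eps / 2).
  { replace (Series (fun k => sa k * y k)) with ((Series (fun k => sa k * y k) - sum_n (fun k => sa k * y k) N) + sum_n (fun k => sa k * y k) N) by ring.
    eapply Rle_lt_trans; [apply Rabs_triang|]. lra. }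
  rewrite (Series_ext _ (fun k => 2 * (sa k * y k))) by (intros; unfold y; field).
  rewrite Series_scal_l, Rabs_mult, Rabs_pos_eq by lra. lra.
Qed.

Lemma lim_atan eps : 0 < eps -> exists M, forall b, M < b -> Rabs (atan b - PI/2) < eps.
Proof.
  intros He.
  pose proof (derivable_continuous_pt atan 0 (derivable_pt_atan 0)) as Hc.
  destruct (Hc eps He) as [alp [Ha Hd]].
  exists (/ alp). intros b Hb.
  assert (Hb0 : 0 < b) by (pose proof (Rinv_0_lt_compat alp Ha); lra).
  assert (E : atan b = PI/2 - atan (/ b)).
  { rewrite atan_inv by lra. ring. }
  rewrite E.
  assert (Hib : 0 < / b) by (apply Rinv_0_lt_compat; lra).
  assert (Hlt : / b < alp).
  { apply Rmult_lt_reg_r with b; [lra|]. rewrite Rinv_l by lra.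
    apply Rmult_lt_reg_l with (/ alp). apply Rinv_0_lt_compat; lra.
    rewrite <- Rmult_assoc, Rinv_l by lra. lra. }
  specialize (Hd (/ b)). simpl in Hd. unfold R_dist in Hd. rewrite atan_0 in Hd.
  replace (PI / 2 - atan (/ b) - PI / 2) with (- (atan (/ b) - 0)) by ring.
  rewrite Rabs_Ropp. apply Hd. split.
  - split; [exact I| lra].
  - rewrite Rminus_0_r, Rabs_pos_eq; lra.
Qed.

Lemma lim_Phi eps : 0 < eps -> exists M, 0 <= M /\ forall b, M < b ->
  Rabs (Series (fun k => sa k * (ww k * atan b - EE k b)) - A0 * PI / 2) < eps.
Proof.
  intros He.
  destruct (lim_EE (eps/2) ltac:(lra)) as [M1 H1].
  assert (HA : 0 < Rabs A0) by (unfold A0; rewrite Rabs_Ropp, Rabs_pos_eq; lra).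
  destruct (lim_atan (eps / 2 / Rabs A0)) as [M2 H2].
  { apply Rdiv_lt_0_compat; lra. }
  exists (Rmax 0 (Rmax M1 M2)). split; [apply Rmax_l|]. intros b Hb.
  assert (Hb1 : M1 < b) by (eapply Rle_lt_trans; [|exact Hb]; eapply Rle_trans; [apply Rmax_l| apply Rmax_r]).
  assert (Hb2 : M2 < b) by (eapply Rle_lt_trans; [|exact Hb]; eapply Rle_trans; [apply Rmax_r| apply Rmax_r]).
  assert (Hb0 : 0 <= b) by (assert (0 <= Rmax 0 (Rmax M1 M2)) by apply Rmax_l; lra).
  rewrite Phi_eq by auto.
  specialize (H1 b Hb1). specialize (H2 b Hb2).
  replace (atan b * A0 - Series (fun k : nat => sa k * EE k b) - A0 * PI / 2)
    with (A0 * (atan b - PI/2) - Series (fun k : nat => sa k * EE k b)) by field.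
  eapply Rle_lt_trans; [apply Rabs_triang|]. rewrite Rabs_Ropp, Rabs_mult.
  assert (Rabs A0 * Rabs (atan b - PI / 2) < eps / 2).
  { apply Rmult_lt_reg_l with (/ Rabs A0). apply Rinv_0_lt_compat; lra.
    rewrite <- Rmult_assoc, Rinv_l by lra. replace (/ Rabs A0 * (eps / 2)) with (eps / 2 / Rabs A0) by (field; lra). lra. }
  lra.
Qed.

Lemma int_gen : is_RInt_gen (fun g => Gbar sa g / (1 + g ^ 2)) (at_point 0) (Rbar_locally p_infty) (A0 * PI / 2).
Proof.
  intros P [eps HP].
  destruct (lim_Phi eps (cond_pos eps)) as [M [HM0 HM]].
  apply Filter_prod with (fun a => a = 0) (fun b => M < b).
  - reflexivity.
  - exists M. auto.
  - intros a b Ha Hb. simpl. subst a.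
    exists (Series (fun k => sa k * (ww k * atan b - EE k b))). split.
    + apply int_G. lra.
    + apply HP. unfold ball; simpl. unfold AbsRing_ball, abs, minus, plus, opp; simpl.
      apply HM. auto.
Qed.

Theorem lemma3p1 :
  exists a b : nat -> R,
    ex_series (fun k => Rabs (a k)) /\
    ex_series (fun k => Rabs (b k)) /\
    exists I : R,
      is_RInt_gen (fun g => Gbar a g / (1 + g ^ 2)) (at_point 0) (Rbar_locally p_infty) I /\
      2 / PI * I = - (351 / 19) /\
      forall g : R, 0 <= g ->
        ex_derive (Gbar a) g /\ ex_derive (Gbar b) g /\
        4 * g * Derive (Gbar a) g + 6 * Gbar a g - 13 * Gbar b g = 0 /\
        4 * g * Derive (Gbar b) g + 9 * Gbar b g
          - 10 / (1 + g ^ 2) * (Gbar a g + g ^ 2 * (2 / PI * I)) = 0.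
Proof.
  exists sa, sb. split; [exact ex_abs_sa|]. split; [exact ex_abs_sb|].
  exists (A0 * PI / 2).
  assert (HI : 2 / PI * (A0 * PI / 2) = A0) by (field; pose proof PI_RGT_0; lra).
  split; [exact int_gen|]. split; [rewrite HI; reflexivity|].
  intros g Hg.
  pose proof (deriv_Gbar sa g ex_abs_sa) as Da.
  pose proof (deriv_Gbar sb g ex_abs_sb) as Db.
  split; [eexists; exact Da|]. split; [eexists; exact Db|].
  rewrite (is_derive_unique _ _ _ Da), (is_derive_unique _ _ _ Db), HI, !Gbar_eq.
  pose proof (XX_bnd g) as HX.
  assert (Hx : Rabs (XX g) < 1) by (rewrite Rabs_pos_eq; lra).
  pose proof (ode1 _ Hx) as O1. pose proof (ode2 _ Hx) as O2.
  pose proof (one_g2 g).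
  assert (E1 : 4 * g * (2 * g / (1 + g ^ 2) ^ 2) = 8 * XX g * (1 - XX g)) by (unfold XX; field; lra).
  assert (E2 : 10 / (1 + g^2) = 10 * (1 - XX g)) by (unfold XX; field; lra).
  assert (E3 : g^2 / (1 + g^2) = XX g) by reflexivity.
  split.
  - rewrite <- Rmult_assoc, E1. exact O1.
  - rewrite <- Rmult_assoc, E1, E2.
    replace (10 * (1 - XX g) * (PSeries sa (XX g) + g ^ 2 * A0)) with
      (10 * (1 - XX g) * PSeries sa (XX g) + 10 * (XX g) * A0).
    + lra.
    + unfold XX. field. lra.
Qed.
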